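(* Let $\pi,\pi'$ be vertices of a Rauzy class $\mathcal{R}$ on the alphabet $\mathcal{A}$. Let $G\subseteq\mathrm{Sp}(\Omega_\pi,\mathbb{Z})$ be the subgroup generated by the symplectic transvections $\{T_{e_\alpha}\}_{\alpha\in\mathcal{A}}$ with respect to $\Omega_\pi$, and $G'\subseteq\mathrm{Sp}(\Omega_{\pi'},\mathbb{Z})$ the subgroup generated by $\{T'_{e_\alpha}\}_{\alpha\in\mathcal{A}}$ with respect to $\Omega_{\pi'}$. If $\gamma$ is any walk (using arrows of $\mathcal{R}$ and their reverses) from $\pi$ to $\pi'$, then the isomorphism $\mathrm{Sp}(\Omega_\pi,\mathbb{Z})\to\mathrm{Sp}(\Omega_{\pi'},\mathbb{Z})$, $S\mapsto B_\gamma SB_\gamma^{-1}$, restricts to an isomorphism between $G$ and $G'$.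
   Context: Permutations $\pi=(\pi_{\mathrm t},\pi_{\mathrm b})$ are pairs of bijections $\mathcal{A}\to\{1,\dots,d\}$, $d=|\mathcal{A}|\ge3$, assumed irreducible and nondegenerate; $\alpha_{\varepsilon,j}=\pi_\varepsilon^{-1}(j)$. Rauzy induction: the top operation, with $\alpha_{\mathrm b,k}=\alpha_{\mathrm t,d}$, replaces the bottom row by $\alpha_{\mathrm b,1},\dots,\alpha_{\mathrm b,k},\alpha_{\mathrm b,d},\alpha_{\mathrm b,k+1},\dots,\alpha_{\mathrm b,d-1}$ (winner $\alpha_{\mathrm t,d}$, loser $\alpha_{\mathrm b,d}$); the bottom operation, with $\alpha_{\mathrm t,k}=\alpha_{\mathrm b,d}$, replaces the top row by $\alpha_{\mathrm t,1},\dots,\alpha_{\mathrm t,k},\alpha_{\mathrm t,d},\alpha_{\mathrm t,k+1},\dots,\alpha_{\mathrm t,d-1}$ (winner $\alpha_{\mathrm b,d}$, loser $\alpha_{\mathrm t,d}$). A Rauzy class is a connected component of the directed graph with arrows $\pi\to R_{\mathrm t}(\pi),\pi\to R_{\mathrm b}(\pi)$. $(\Omega_\pi)_{\alpha\beta}=+1$ if $\pi_{\mathrm t}(\alpha)<\pi_{\mathrm t}(\beta)$ and $\pi_{\mathrm b}(\alpha)>\pi_{\mathrm b}(\beta)$, $-1$ if the reverse inequalities hold, $0$ otherwise. For an arrow with winner $\alpha_{\mathrm w}$, loser $\alpha_{\mathrm l}$, $B_\gamma=\mathrm{Id}+E_{\alpha_{\mathrm l}\alpha_{\mathrm w}}$,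 $B_{\gamma^{-1}}=B_\gamma^{-1}$, $B_{\gamma_1\cdots\gamma_n}=B_{\gamma_n}\cdots B_{\gamma_1}$; for a walk from $\pi$ to $\pi'$, $\Omega_{\pi'}=B_\gamma\Omega_\pi B_\gamma^{\intercal}$. $\mathrm{Sp}(\Omega,\mathbb{Z})=\{S\in\mathrm{GL}(\mathbb{Z}^{\mathcal{A}}):S\Omega S^{\intercal}=\Omega\}$ acting on row vectors. With $\langle u,v\rangle=u\Omega v^{\intercal}$, the symplectic transvection along $v$ is $T_v(u)=u+\langle v,u\rangle v$; $e_\alpha$ are the canonical basis vectors. *)

(* Defs.v *)
From HB Require Import structures.
From mathcomp Require Import all_boot all_order all_algebra.
Set Implicit Arguments. Unset Strict Implicit. Unset Printing Implicit Defensive.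
Import GRing.Theory.
Local Open Scope ring_scope.

(* A permutation pi = (pi_t, pi_b) on the alphabet A is
   represented by its two rows: the top row [alpha_{t,1}; ...; alpha_{t,d}]
   and the bottom row [alpha_{b,1}; ...; alpha_{b,d}], each an ordering of A.
   Vectors in Z^A are row vectors 'rV[int]_#|A| indexed through enum_rank. *)

Section Rauzy.
Variable A : finType.

Definition perm_pair := (seq A * seq A)%type.

(* pi_eps(a) : 1-based position of a in the row s *)
Definition pos (s : seq A) (a : A) : nat := (index a s).+1.

Definition valid (p : perm_pair) : bool :=
  perm_eq p.1 (enum A) && perm_eq p.2 (enum A).

Definition rirreducible (p : perm_pair) : bool :=
  [forall k : 'I_#|A|, (0 < k)%N ==> ~~ perm_eq (take k p.1) (take k p.2)].

Definition rvertex (p : perm_pair) : bool := valid p && rirreducible p.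

(* monodromy  m(j) = pi_b(alpha_{t,j})  and its inverse  m^-1(i) = pi_t(alpha_{b,i}) *)
Definition mono (p : perm_pair) (j : nat) : nat :=
  nth 0%N [seq pos p.2 a | a <- p.1] j.-1.
Definition monoinv (p : perm_pair) (i : nat) : nat :=
  nth 0%N [seq pos p.1 a | a <- p.2] i.-1.

(* Veech's permutation sigma on {0,...,d}, whose cycles are the singularities
   of the suspension; a cycle c carries cone angle
   2 pi (|c| - [0 in c] - [d in c]). *)
Definition vsigma (p : perm_pair) (j : nat) : nat :=
  if j == 0%N then (monoinv p 1).-1
  else if j == monoinv p #|A| then #|A|
  else (monoinv p (mono p j).+1).-1.

Definition vsigma_ord (p : perm_pair) (j : 'I_#|A|.+1) : 'I_#|A|.+1 :=
  inord (vsigma p j).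

(* rnondegenerate: no singularity of cone angle 2 pi (no marked point) *)
Definition rnondegenerate (p : perm_pair) : bool :=
  [forall j : 'I_#|A|.+1,
    (order (vsigma_ord p) j - fconnect (vsigma_ord p) j ord0
       - fconnect (vsigma_ord p) j ord_max != 1)%N].

Inductive kind := Top | Bot.

(* modify the row [los]: the winner is the last letter of [win], the loser
   the last letter of [los]; with w = alpha_{los,k} the new row is
   alpha_{los,1..k}, loser, alpha_{los,k+1..d-1}. *)
Definition rauzy_row (win los : seq A) : seq A :=
  match win, los with
  | x :: xs, y :: ys =>
      let w := last x xs in let l := last y ys in let b := belast y ys in
      let k := pos los w in take k b ++ l :: drop k b
  | _, _ => los
  end.

Definition rauzy (k : kind) (p : perm_pair) : perm_pair :=
  match k with
  | Top => (p.1, rauzy_row p.1 p.2)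
  | Bot => (rauzy_row p.2 p.1, p.2)
  end.

Definition winner_loser (k : kind) (p : perm_pair) : option (A * A) :=
  match p.1, p.2 with
  | x :: xs, y :: ys =>
      match k with
      | Top => Some (last x xs, last y ys)
      | Bot => Some (last y ys, last x xs)
      end
  | _, _ => None
  end.

Local Notation n := #|A|.

Definition Emx (a b : A) : 'M[int]_n := delta_mx (enum_rank a) (enum_rank b).

Definition Bmx (k : kind) (p : perm_pair) : 'M[int]_n :=
  match winner_loser k p with
  | Some (w, l) => 1%:M + Emx l w
  | None => 1%:M
  end.

Definition Omega (p : perm_pair) : 'M[int]_n :=
  \matrix_(i, j)
    let a := enum_val i in let b := enum_val j in
    if (pos p.1 a < pos p.1 b)%N && (pos p.2 a > pos p.2 b)%N then 1
    else if (pos p.1 a > pos p.1 b)%N && (pos p.2 a < pos p.2 b)%N then -1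
    else 0.

(* walk B p q M : M = B_gamma for some walk gamma from p to q in the Rauzy
   graph (vertices: valid rirreducible permutations), using arrows and their
   reverses; B_{gamma_1 ... gamma_m} = B_{gamma_m} ... B_{gamma_1}. *)
Inductive walk : perm_pair -> perm_pair -> 'M[int]_n -> Prop :=
| walk_nil p : walk p p 1%:M
| walk_fwd k p q M : rvertex p -> rvertex (rauzy k p) ->
    walk (rauzy k p) q M -> walk p q (M *m Bmx k p)
| walk_bwd k p q M : rvertex p -> rvertex (rauzy k p) ->
    walk p q M -> walk (rauzy k p) q (M *m invmx (Bmx k p)).

Definition evec (a : A) : 'rV[int]_n := delta_mx 0 (enum_rank a).

End Rauzy.

(* symplectic transvection along v w.r.t. Om, as a matrix acting on row
   vectors:  u *m transvection Om v = u + (v Om u^T) v *)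
Definition transvection (n : nat) (Om : 'M[int]_n) (v : 'rV[int]_n) : 'M[int]_n :=
  1%:M + Om^T *m v^T *m v.

Inductive gen_group (n : nat) (X : 'M[int]_n -> Prop) : 'M[int]_n -> Prop :=
| gg_one : gen_group X 1%:M
| gg_gen S : X S -> gen_group X S
| gg_mul S T : gen_group X S -> gen_group X T -> gen_group X (S *m T)
| gg_inv S : gen_group X S -> gen_group X (invmx S).

Definition Gtrans (A : finType) (p : perm_pair A) : 'M[int]_#|A| -> Prop :=
  gen_group (fun S => exists a : A, S = transvection (Omega p) (evec a)).

(* Main.v *)
Require Import Defs.
From HB Require Import structures.
From mathcomp Require Import all_boot all_order all_algebra.
Set Implicit Arguments. Unset Strict Implicit. Unset Printing Implicit Defensive.
Import GRing.Theory.
From mathcomp Require Import zify.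
Local Open Scope ring_scope.

Section Mx.
Variable n : nat.
Implicit Types (S T M : 'M[int]_n).

Lemma inv_uniq M N : M *m N = 1%:M -> invmx M = N.
Proof.
move=> MN; have [uM _] := mulmx1_unit MN.
by rewrite -[invmx M]mulmx1 -MN mulmxA (mulVmx uM) mul1mx.
Qed.

Lemma invmx_mul M N : M \in unitmx -> N \in unitmx ->
  invmx (M *m N) = invmx N *m invmx M.
Proof.
move=> uM uN; apply: inv_uniq.
by rewrite !mulmxA -(mulmxA M) (mulmxV uN) mulmx1 (mulmxV uM).
Qed.

Definition cj M S := M *m S *m invmx M.

Lemma cj1 M : M \in unitmx -> cj M 1%:M = 1%:M.
Proof. by move=> uM; rewrite /cj mulmx1 mulmxV. Qed.

Lemma cjM M S T : M \in unitmx -> cj M (S *m T) = cj M S *m cj M T.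
Proof.
move=> uM; rewrite /cj !mulmxA; congr (_ *m _).
by rewrite -(mulmxA _ (invmx M)) (mulVmx uM) mulmx1.
Qed.

Lemma cjV M S : M \in unitmx -> cj M (invmx S) = invmx (cj M S).
Proof.
move=> uM; have [uS|nuS] := boolP (S \in unitmx).
  rewrite /cj !invmx_mul ?unitmx_mul ?unitmx_inv ?uM ?uS // invmxK.
  by rewrite mulmxA.
rewrite invmx_out // invmx_out //.
by rewrite inE /cj !unitmx_mul unitmx_inv uM (negbTE nuS).
Qed.

Lemma cjK M S : M \in unitmx -> cj (invmx M) (cj M S) = S.
Proof.
move=> uM; rewrite /cj invmxK !mulmxA (mulVmx uM) mul1mx.
by rewrite -mulmxA (mulVmx uM) mulmx1.
Qed.

Lemma cjKV M S : M \in unitmx -> cj M (cj (invmx M) S) = S.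
Proof. by move=> uM; rewrite -{1}[M]invmxK cjK // unitmx_inv. Qed.

Lemma cjC M N S : M \in unitmx -> N \in unitmx -> cj (M *m N) S = cj M (cj N S).
Proof. by move=> uM uN; rewrite /cj invmx_mul // !mulmxA. Qed.

Lemma gg_cj M (X Y : 'M[int]_n -> Prop) : M \in unitmx ->
  (forall S, X S -> gen_group Y (cj M S)) -> forall S, gen_group X S -> gen_group Y (cj M S).
Proof.
move=> uM h S; elim => [|S0 /h //|S1 S2 _ h1 _ h2|S1 _ h1].
- by rewrite cj1 //; constructor.
- by rewrite cjM //; constructor.
- by rewrite cjV //; constructor.
Qed.

Lemma gg_pre M (X Y : 'M[int]_n -> Prop) : M \in unitmx ->
  (forall S', Y S' -> exists2 S, gen_group X S & S' = cj M S) ->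
  forall S', gen_group Y S' -> exists2 S, gen_group X S & S' = cj M S.
Proof.
move=> uM h S'; elim => [|S0 /h //|S1 S2 _ [T1 h1 ->] _ [T2 h2 ->]|S1 _ [T1 h1 ->]].
- by exists 1%:M; [constructor | rewrite cj1].
- by exists (T1 *m T2); [constructor | rewrite cjM].
- by exists (invmx T1); [constructor | rewrite cjV].
Qed.


Implicit Types (B Om : 'M[int]_n) (u v : 'rV[int]_n) (c d : int).

Definition tv Om c u := 1%:M + c *: (Om^T *m u^T *m u).

Lemma trN Om : (- Om)^T = - Om^T.
Proof. by apply/matrixP => i j; rewrite !mxE. Qed.
Lemma trD (M N : 'M[int]_n) : (M + N)^T = M^T + N^T.
Proof. by apply/matrixP => i j; rewrite !mxE. Qed.
Lemma trZ c (M : 'M[int]_n) : (c *: M)^T = c *: M^T.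
Proof. by apply/matrixP => i j; rewrite !mxE. Qed.

Lemma quad0 Om u : Om^T = - Om -> u *m Om *m u^T = 0.
Proof.
move=> aS; set x := u *m Om *m u^T.
have hx : x^T = - x.
  by rewrite /x !trmx_mul trmxK aS mulNmx mulmxN mulmxA.
apply/matrixP => i j; rewrite !ord1 mxE.
have : x^T 0 0 = (- x) 0 0 by rewrite hx.
rewrite !mxE => h. lia.
Qed.

Lemma quad0T Om u : Om^T = - Om -> u *m Om^T *m u^T = 0.
Proof. by move=> aS; apply: quad0; rewrite trmxK aS opprK. Qed.

Lemma tvK Om c u : Om^T = - Om -> tv Om c u *m tv Om (- c) u = 1%:M.
Proof.
move=> aS; rewrite /tv mulmxDl !mulmxDr !mul1mx mulmx1.
have NN : (Om^T *m u^T *m u) *m (Om^T *m u^T *m u) = 0.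
  have -> : (Om^T *m u^T *m u) *m (Om^T *m u^T *m u)
     = Om^T *m u^T *m (u *m Om^T *m u^T) *m u by rewrite !mulmxA.
  by rewrite quad0T // mulmx0 mul0mx.
rewrite -scalemxAl -scalemxAr NN !scaler0 addr0 scaleNr.
by rewrite addrNK.
Qed.

Lemma tv_unit Om c u : Om^T = - Om -> tv Om c u \in unitmx.
Proof. by move=> aS; have [] := mulmx1_unit (tvK c u aS). Qed.

Lemma tv_inv Om c u : Om^T = - Om -> invmx (tv Om c u) = tv Om (- c) u.
Proof. by move=> aS; apply: inv_uniq; apply: tvK. Qed.

Lemma tv_sympl Om c u : Om^T = - Om ->
  tv Om c u *m Om *m (tv Om c u)^T = Om.
Proof.
move=> aS; rewrite /tv trD trmx1 trZ !trmx_mul !trmxK.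
rewrite mulmxDl mul1mx !mulmxDr mulmx1 mulmxDl.
have e1 : Om^T *m u^T *m u *m Om *m (u^T *m (u *m Om)) = 0.
  have -> : Om^T *m u^T *m u *m Om *m (u^T *m (u *m Om)) = Om^T *m u^T *m (u *m Om *m u^T) *m (u *m Om)
    by rewrite !mulmxA.
  by rewrite quad0 // mulmx0 mul0mx.
have e2 : Om^T *m u^T *m u *m Om = - (Om *m (u^T *m (u *m Om))).
  by rewrite aS !mulNmx !mulmxA.
rewrite -!scalemxAl -!scalemxAr e1 !scaler0 addr0 e2 scalerN.
by rewrite addrNK.
Qed.

Lemma cj_tv B Om Om' d v : B \in unitmx -> B *m Om *m B^T = Om' ->
  cj B (tv Om d v) = tv Om' d (v *m invmx B).
Proof.
move=> uB hO; rewrite /cj /tv mulmxDr mulmx1 mulmxDl (mulmxV uB).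
congr (_ + _); rewrite -scalemxAr -scalemxAl; congr (_ *: _).
rewrite -hO !trmx_mul trmxK !mulmxA -(mulmxA _ _ (invmx B)^T) trmx_inv.
by rewrite mulmxV ?unitmx_tr // mulmx1.
Qed.


Local Notation ev i := (@delta_mx int 1 n 0 i).
Definition Xg Om := fun S : 'M[int]_n => exists i : 'I_n, S = tv Om 1 (delta_mx 0 i).

Lemma gg_cjin (X : 'M[int]_n -> Prop) M S :
  gen_group X M -> gen_group X S -> gen_group X (cj M S).
Proof. by move=> hM hS; rewrite /cj; do 2? constructor => //; constructor. Qed.

Lemma tv_in Om c (i : 'I_n) : Om^T = - Om -> (c = 1 \/ c = -1) ->
  gen_group (Xg Om) (tv Om c (delta_mx 0 i)).
Proof.
move=> aS [->|->]; first by constructor; exists i.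
rewrite -tv_inv // ; constructor; constructor; by exists i.
Qed.

Lemma rowE' (M : 'M[int]_n) (l w : 'I_n) :
  delta_mx 0 l *m M *m (delta_mx 0 w)^T = (M l w)%:M :> 'M[int]_1.
Proof.
rewrite trmx_delta -colE -rowE; apply/matrixP => i j.
by rewrite !ord1 !mxE eqxx mulr1n.
Qed.

Lemma step_abs Om Om' (l w : 'I_n) (c : int) :
  Om^T = - Om -> Om'^T = - Om' -> l != w ->
  (1%:M + delta_mx l w) *m Om *m (1%:M + delta_mx l w)^T = Om' ->
  c = Om w l -> (c = 1 \/ c = -1) ->
  (forall S, gen_group (Xg Om) S -> gen_group (Xg Om') (cj (1%:M + delta_mx l w) S)) /\
  (forall S', gen_group (Xg Om') S' ->
     exists2 S, gen_group (Xg Om) S & S' = cj (1%:M + delta_mx l w) S).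
Proof.
move=> aS aS' nlw hB hc c1.
set E := delta_mx l w : 'M[int]_n.
have EE : E *m E = 0 by rewrite /E mul_delta_mx_0 // eq_sym.
have BB : (1%:M + E) *m (1%:M - E) = 1%:M.
  by rewrite mulmxDl mul1mx mulmxBr mulmx1 EE subr0 subrK.
have uB : (1%:M + E) \in unitmx by have [] := mulmx1_unit BB.
have iB : invmx (1%:M + E) = 1%:M - E by apply: inv_uniq.
have eB : forall (a : 'I_n), a != l -> ev a *m invmx (1%:M + E) = ev a.
  move=> a nal; rewrite iB mulmxBr mulmx1 /E mul_delta_mx_0 ?subr0 //.
have eL : (ev l + ev w) *m invmx (1%:M + E) = ev l :> 'rV[int]_n.
  rewrite mulmxDl (eB w); last by rewrite eq_sym.
  rewrite iB mulmxBr mulmx1 /E mul_delta_mx.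
  by rewrite subrK.
have Sl : ev l *m tv Om c (ev w) = ev l + ev w :> 'rV[int]_n.
  rewrite /tv mulmxDr mulmx1 -scalemxAr !mulmxA rowE' mul_scalar_mx scalerA.
  have -> : c * Om^T l w = 1 by rewrite mxE -hc; case: c1 => ->.
  by rewrite scale1r.
have hT : tv Om 1 (ev l + ev w) = cj (tv Om (- c) (ev w)) (tv Om 1 (ev l)).
  rewrite (cj_tv _ _ (tv_unit _ _ aS) (tv_sympl _ _ aS)) tv_inv // opprK.
  by rewrite Sl.
have c1' : (- c = 1 \/ - c = -1) by case: c1 => ->; [right|left]; rewrite ?opprK.
split.
  apply: gg_cj => // S [a ->].
  have [->|nal] := eqVneq a l; last first.
    by rewrite (cj_tv _ _ uB hB) eB //; constructor; exists a.
  have -> : tv Om 1 (ev l) = cj (tv Om c (ev w)) (tv Om 1 (ev l + ev w)).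
    by rewrite hT -tv_inv // cjKV // tv_unit.
  rewrite [cj (tv _ _ _) _]/cj !cjM // cjV //.
  rewrite !(cj_tv _ _ uB hB) eL eB 1?eq_sym //.
  apply: gg_mul; [apply: gg_mul|apply: gg_inv]; try exact: tv_in.
  by constructor; exists l.
apply: gg_pre => // S' [a ->].
have [->|nal] := eqVneq a l; last first.
  by exists (tv Om 1 (ev a)); [constructor; exists a | rewrite (cj_tv _ _ uB hB) eB].
exists (tv Om 1 (ev l + ev w)); last by rewrite (cj_tv _ _ uB hB) eL.
rewrite hT; apply: gg_cjin; first exact: tv_in.
by constructor; exists l.
Qed.

Lemma unitB (l w : 'I_n) : l != w -> (1%:M + delta_mx l w : 'M[int]_n) \in unitmx.
Proof.
move=> nlw; have EE : delta_mx l w *m delta_mx l w = 0 :> 'M[int]_n.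
  by rewrite mul_delta_mx_0 // eq_sym.
have BB : (1%:M + delta_mx l w) *m (1%:M - delta_mx l w) = 1%:M :> 'M[int]_n.
  by rewrite mulmxDl mul1mx mulmxBr mulmx1 EE subr0 subrK.
by have [] := mulmx1_unit BB.
Qed.

Lemma gg_mono (X Y : 'M[int]_n -> Prop) S :
  (forall S, X S -> gen_group Y S) -> gen_group X S -> gen_group Y S.
Proof.
move=> h; elim => [|S0 /h //|S1 S2 _ h1 _ h2|S1 _ h1]; by constructor.
Qed.
End Mx.



Definition om (t1 t2 s1 s2 : nat) : int :=
  if (t1 < t2)%N && (s1 > s2)%N then 1 else if (t1 > t2)%N && (s1 < s2)%N then -1 else 0.
Lemma om_anti t1 t2 s1 s2 : om t2 t1 s2 s1 = - om t1 t2 s1 s2.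
Proof. rewrite /om; repeat case: ifP; move=> *; lia. Qed.
Lemma om_sw t1 t2 s1 s2 : om s1 s2 t1 t2 = - om t1 t2 s1 s2.
Proof. rewrite /om; repeat case: ifP; move=> *; lia. Qed.


Section Seq.
Variable T : eqType.
Implicit Types (r s : seq T) (x y z : T).

Lemma idx_inj s x y : x \in s -> y \in s -> index x s = index y s -> x = y.
Proof. by move=> hx hy e; rewrite -(nth_index x hx) e nth_index. Qed.

Lemma last_lt r z x : uniq (rcons r z) -> x \in rcons r z -> x != z ->
  (index x (rcons r z) < index z (rcons r z))%N.
Proof.
rewrite rcons_uniq mem_rcons in_cons => /andP [zr _] /orP [/eqP -> |xr]; first by rewrite eqxx.
move=> _; rewrite -cats1 !index_cat xr (negbTE zr) /= eqxx addn0.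
by rewrite index_mem.
Qed.

Lemma ins_l r l k : l \notin r -> (k <= size r)%N -> index l (take k r ++ l :: drop k r) = k.
Proof.
move=> lr kr; rewrite index_cat.
have -> : (l \in take k r) = false by apply/negP => /mem_take; apply/negP.
by rewrite /= eqxx addn0 size_takel.
Qed.

Lemma ins_x r l k x : l \notin r -> (k <= size r)%N -> x \in r ->
  index x (take k r ++ l :: drop k r) = if (index x r < k)%N then index x r else (index x r).+1.
Proof.
move=> lr kr xr.
have xl : l != x by apply/eqP => e; move: lr; rewrite e xr.
have er : index x r = index x (take k r ++ drop k r) by rewrite cat_take_drop.
rewrite index_cat in_take //; case: ifP => h.
  by rewrite er index_cat in_take // h.
by rewrite er index_cat in_take // h /= (negbTE xl) size_takel // addnS.
Qed.
End Seq.

Section C.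
Variable A : finType.
Local Notation n := #|A|.

Lemma OmegaE (p : perm_pair A) i j : Omega p i j =
  om (pos p.1 (enum_val i)) (pos p.1 (enum_val j)) (pos p.2 (enum_val i)) (pos p.2 (enum_val j)).
Proof. by rewrite mxE. Qed.

Lemma Omega_anti (p : perm_pair A) : (Omega p)^T = - Omega p.
Proof. by apply/matrixP => i j; rewrite [LHS]mxE [RHS]mxE !OmegaE om_anti. Qed.

Lemma Omega_swap (p : perm_pair A) : Omega (p.2, p.1) = - Omega p.
Proof. by apply/matrixP => i j; rewrite [RHS]mxE !OmegaE /= om_sw. Qed.

Lemma rank_eq (a b : A) : (enum_rank a == enum_rank b) = (a == b).
Proof. by rewrite (inj_eq enum_rank_inj). Qed.

Lemma dM_E (i0 j0 : 'I_n) (M : 'M[int]_n) i j :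
  (delta_mx i0 j0 *m M) i j = (i == i0)%:R * M j0 j.
Proof.
rewrite mxE (bigD1 j0) //= big1 ?addr0 => [|k /negbTE nk]; rewrite mxE ?eqxx ?nk ?andbT ?andbF //.
by rewrite mul0r.
Qed.

Lemma Md_E (i0 j0 : 'I_n) (M : 'M[int]_n) i j :
  (M *m delta_mx i0 j0) i j = (j == j0)%:R * M i i0.
Proof.
rewrite mxE (bigD1 i0) //= big1 ?addr0 => [|k /negbTE nk]; rewrite mxE ?eqxx ?nk ?andbT ?andbF //=.
  by rewrite mulrC.
by rewrite mulr0.
Qed.

Lemma conjE (D M : 'M[int]_n) :
  (1%:M + D) *m M *m (1%:M + D)^T = M + D *m M + M *m D^T + D *m M *m D^T.
Proof.
rewrite trD trmx1 mulmxDl mul1mx !mulmxDr !mulmx1 mulmxDl !addrA.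
done.
Qed.

Lemma om_top (a b l w : A) (T S S' : A -> nat) :
 (forall x y, T x = T y -> x = y) -> (forall x y, S x = S y -> x = y) ->
 (forall x, x != w -> T x < T w)%N -> (forall x, x != l -> S x < S l)%N ->
 S' l = (S w).+1 -> (forall x, x != l -> S' x = if (S x <= S w)%N then S x else (S x).+1) -> l != w ->
 om (T a) (T b) (S' a) (S' b) = om (T a)(T b)(S a)(S b) + (a == l)%:R * om (T w)(T b)(S w)(S b)
    + (b == l)%:R * om (T a) (T w) (S a) (S w).
Proof.
move=> Ti Si Tw Sl S'l S'x nlw.
have nwl : w != l by rewrite eq_sym.
have nT x y : x != y -> T x != T y by move=> h; apply/eqP => /Ti; apply/eqP.
have nS x y : x != y -> S x != S y by move=> h; apply/eqP => /Si; apply/eqP.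
have S'E x : x != l -> ((S x <= S w)%N /\ S' x = S x) \/ ((S w < S x)%N /\ S' x = (S x).+1).
  by move=> /S'x ->; case: leqP => h; [left|right]; split.
have t1 : true%:R = 1 :> int by [].
have f0 : false%:R = 0 :> int by [].
have [->|nal] := eqVneq a l; have [->|nbl] := eqVneq b l.
- rewrite t1 !mul1r; move: (Tw _ nlw) (Sl _ nwl); by rewrite /om; repeat case: ifP; move=> *; lia.
- rewrite ?eqxx ?(negbTE nbl) t1 f0 mul1r mul0r addr0 S'l.
  have [->|nbw] := eqVneq b w.
    move: (Tw _ nlw) (Sl _ nwl) (S'x _ nwl); rewrite leqnn => ? ? ->.
    by rewrite /om; repeat case: ifP; move=> *; lia.
  move: (Tw _ nlw) (Sl _ nwl) (Tw _ nbw) (Sl _ nbl) (nT _ _ nbl) (nS _ _ nbw).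
  case: (S'E _ nbl) => [[? ->]|[? ->]] ? ? ? ? ? ?; rewrite /om; repeat case: ifP; move=> *; lia.
- rewrite ?eqxx ?(negbTE nal) t1 f0 mul1r mul0r addr0 S'l.
  have [->|naw] := eqVneq a w.
    move: (Tw _ nlw) (Sl _ nwl) (S'x _ nwl); rewrite leqnn => ? ? ->.
    by rewrite /om; repeat case: ifP; move=> *; lia.
  move: (Tw _ nlw) (Sl _ nwl) (Tw _ naw) (Sl _ nal) (nT _ _ nal) (nS _ _ naw).
  case: (S'E _ nal) => [[? ->]|[? ->]] ? ? ? ? ? ?; rewrite /om; repeat case: ifP; move=> *; lia.
- rewrite ?(negbTE nal) ?(negbTE nbl) f0 !mul0r !addr0.
  have [->|nab] := eqVneq a b; first by rewrite /om !ltnn.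
  move: (nS _ _ nab).
  by case: (S'E _ nal) => [[? ->]|[? ->]]; case: (S'E _ nbl) => [[? ->]|[? ->]] ?; rewrite /om; repeat case: ifP; move=> *; lia.
Qed.

Lemma conj_entry (l w : 'I_n) (M : 'M[int]_n) i j :
  ((1%:M + delta_mx l w) *m M *m (1%:M + delta_mx l w)^T) i j =
  M i j + (i == l)%:R * M w j + (j == l)%:R * M i w + (j == l)%:R * ((i == l)%:R * M w w).
Proof.
have addE (M1 M2 : 'M[int]_n) i1 j1 : (M1 + M2) i1 j1 = M1 i1 j1 + M2 i1 j1 by rewrite mxE.
rewrite conjE trmx_delta !addE.
by rewrite Md_E dM_E Md_E dM_E.
Qed.

Lemma top_step (p : perm_pair A) : valid p -> rirreducible p -> (1 < n)%N ->
  exists l w : A, [/\ l != w, winner_loser Top p = Some (w, l),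
    (1%:M + Emx l w) *m Omega p *m (1%:M + Emx l w)^T = Omega (rauzy Top p) &
    Omega p (enum_rank w) (enum_rank l) = -1].
Proof.
case: p => t s; rewrite /valid /= => /andP [pt ps] irr n2.
have ut : uniq t by rewrite (perm_uniq pt) enum_uniq.
have us : uniq s by rewrite (perm_uniq ps) enum_uniq.
have mt z : z \in t by rewrite (perm_mem pt) mem_enum.
have ms z : z \in s by rewrite (perm_mem ps) mem_enum.
have st : size t = n by rewrite (perm_size pt) -cardE.
have ss : size s = n by rewrite (perm_size ps) -cardE.
case: t pt ut mt st irr => [|x xs] pt ut mt st irr; first by rewrite -st in n2.
case: s ps us ms ss irr => [|y ys] ps us ms ss irr; first by rewrite -ss in n2.
set w := last x xs; set l := last y ys.
set bt := belast x xs; set r := belast y ys.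
have et : x :: xs = rcons bt w := lastI x xs.
have es : y :: ys = rcons r l := lastI y ys.
have ut' := ut; have us' := us.
rewrite et rcons_uniq in ut'; case/andP: ut' => wbt ubt.
rewrite es rcons_uniq in us'; case/andP: us' => lr ur.
have nlw : l != w.
  apply/eqP => e.
  have sbt : size bt = n.-1 by rewrite size_belast -st.
  have sr : size r = n.-1 by rewrite size_belast -ss.
  have k1 : (n.-1 < n)%N by rewrite ltn_predL (ltnW n2).
  move/forallP: irr => /(_ (Ordinal k1)) /=.
  have -> : (0 < n.-1)%N by rewrite -ltnS (ltn_predK n2).
  rewrite et es -!cats1 !take_size_cat // => /negP; apply.
  apply: uniq_perm => // z.
  have := mt z; have := ms z; rewrite et es !mem_rcons !in_cons e.
  case: (eqVneq z w) => [->|_] /=; last by move=> -> ->.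
  by rewrite (negbTE wbt) -e (negbTE lr).
have wr : w \in r by have := ms w; rewrite es mem_rcons in_cons eq_sym (negbTE nlw).
have idxr z : z \in r -> index z (y :: ys) = index z r.
  by move=> zr; rewrite es -cats1 index_cat zr.
exists l, w; split => //.
  apply/matrixP => i j.
  rewrite conj_entry !OmegaE -[i]enum_valK -[j]enum_valK !rank_eq.
  rewrite !enum_rankK /= /om !ltnn !mulr0 addr0 -/(om _ _ _ _) -!/(om _ _ _ _).
  symmetry; apply: om_top => //.
  - by move=> a b [] /(idx_inj (mt a) (mt b)) .
  - by move=> a b [] /(idx_inj (ms a) (ms b)) .
  - move=> a naw; rewrite /pos ltnS et; apply: last_lt => //; by rewrite -et.
  - move=> a nal; rewrite /pos ltnS es; apply: last_lt => //; by rewrite -es.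
  - rewrite /pos /rauzy_row -/w -/l -/r ins_l //.
    by rewrite /pos idxr // index_mem.
  - move=> a nal.
    have ar : a \in r by have := ms a; rewrite es mem_rcons in_cons (negbTE nal).
    rewrite /pos /rauzy_row -/w -/l -/r ins_x //; last by rewrite /pos idxr // index_mem.
    by rewrite (idxr a ar) (idxr w wr); case: ifP.
rewrite OmegaE !enum_rankK /=.
have h1 : (pos (x :: xs) l < pos (x :: xs) w)%N.
  by rewrite /pos ltnS et; apply: last_lt => //; rewrite -et.
have h2 : (pos (y :: ys) w < pos (y :: ys) l)%N.
  by rewrite /pos ltnS es; apply: last_lt; rewrite -?es // eq_sym.
by rewrite /om; repeat case: ifP; move=> *; lia.
Qed.

Lemma wl_bot (p : perm_pair A) : winner_loser Bot p = winner_loser Top (p.2, p.1).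
Proof. by case: p => [[|x xs] [|y ys]]. Qed.

Lemma oppE (M : 'M[int]_n) i j : (- M) i j = - M i j.
Proof. by rewrite mxE. Qed.

Lemma rstep k (p : perm_pair A) : rvertex p -> (1 < n)%N ->
  exists l w : A, exists c : int, [/\ l != w, Bmx k p = 1%:M + Emx l w,
    Bmx k p *m Omega p *m (Bmx k p)^T = Omega (rauzy k p),
    c = Omega p (enum_rank w) (enum_rank l) & (c = 1 \/ c = -1)].
Proof.
move=> /andP [vp ip] n2; case: k.
  have [l [w [nlw hwl hB hc]]] := top_step vp ip n2.
  exists l, w, (-1); rewrite /Bmx hwl; split => //; by right.
have vs : valid (p.2, p.1) by move: vp; rewrite /valid /= andbC.
have irs : rirreducible (p.2, p.1).
  apply/forallP => k; move/forallP: ip => /(_ k) /=; by rewrite perm_sym.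
have [l [w [nlw hwl hB hc]]] := top_step vs irs n2.
exists l, w, 1; rewrite /Bmx wl_bot hwl; split => //; last by left.
  by rewrite -[Omega p]opprK -Omega_swap mulmxN mulNmx hB -Omega_swap.
by rewrite -[Omega p]opprK -Omega_swap oppE hc opprK.
Qed.

Lemma Gtrans_Xg (p : perm_pair A) S : Gtrans p S <-> gen_group (Xg (Omega p)) S.
Proof.
split; apply: gg_mono => S0.
  by move=> [a ->]; constructor; exists (enum_rank a); rewrite /tv scale1r.
move=> [i ->]; constructor; exists (enum_val i).
by rewrite /transvection /evec enum_valK /tv scale1r.
Qed.

Definition Iso (p q : perm_pair A) (M : 'M[int]_n) :=
  M \in unitmx /\ (forall S, Gtrans p S -> Gtrans q (cj M S)) /\
  (forall S', Gtrans q S' -> exists2 S, Gtrans p S & S' = cj M S).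

Lemma Iso_step k (p : perm_pair A) : rvertex p -> (1 < n)%N -> Iso p (rauzy k p) (Bmx k p).
Proof.
move=> vp n2; have [l [w [c [nlw eB hB hc c1]]]] := rstep k vp n2.
rewrite eB in hB *.
have nlw' : enum_rank l != enum_rank w by rewrite rank_eq.
have [f b] := step_abs (Omega_anti p) (Omega_anti (rauzy k p)) nlw' hB hc c1.
split; first exact: unitB.
split.
  by move=> S /Gtrans_Xg hS; apply/Gtrans_Xg; apply: f.
move=> S' /Gtrans_Xg /b [S hS ->]; exists S => //; exact/Gtrans_Xg.
Qed.

Lemma Iso_refl (p : perm_pair A) : Iso p p 1%:M.
Proof.
have e S : cj 1%:M S = S by rewrite /cj invmx1 mul1mx mulmx1.
split; first exact: unitmx1.
by split => [S|S' h]; [rewrite e | exists S'; rewrite ?e].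
Qed.

Lemma Iso_comp (p q r : perm_pair A) M N : Iso p q M -> Iso q r N -> Iso p r (N *m M).
Proof.
move=> [uM [fM bM]] [uN [fN bN]]; split; first by rewrite unitmx_mul uN uM.
split => [S h|S'' /bN [S' /bM [S h ->] ->]]; rewrite ?cjC //.
  by apply: fN; apply: fM.
by exists S; rewrite ?cjC.
Qed.

Lemma Iso_inv (p q : perm_pair A) M : Iso p q M -> Iso q p (invmx M).
Proof.
move=> [uM [fM bM]]; split; first by rewrite unitmx_inv.
split => [S' /bM [S h ->]|S h]; first by rewrite cjK.
by exists (cj M S); [apply: fM | rewrite cjK].
Qed.

Lemma walk_iso (p q : perm_pair A) M : (1 < n)%N -> walk p q M -> Iso p q M.
Proof.
move=> n2; elim => [p0|k p0 q0 M0 vp vr _ IH|k p0 q0 M0 vp vr _ IH].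
- exact: Iso_refl.
- exact: Iso_comp (Iso_step k vp n2) IH.
- exact: Iso_comp (Iso_inv (Iso_step k vp n2)) IH.
Qed.

End C.

Unset Implicit Arguments.
Set Strict Implicit.

Theorem lemma2p7 (A : finType) (p p' : perm_pair A) (B : 'M[int]_#|A|) :
  (3 <= #|A|)%N ->
  rvertex p -> rnondegenerate p -> rvertex p' -> rnondegenerate p' ->
  walk p p' B ->
  (forall S, Gtrans p S -> Gtrans p' (B *m S *m invmx B)) /\
  (forall S', Gtrans p' S' -> exists2 S, Gtrans p S & S' = B *m S *m invmx B).
Proof.
move=> d3 _ _ _ _ hw.
have n2 : (1 < #|A|)%N by apply: leq_trans d3.
by have [_ [f b]] := walk_iso n2 hw; split.
Qed.
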